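(* Let $m\ge 2$ and let $t,r_2$ be integers with $t\ge 0$ and $0\le r_2\le \lfloor\frac{m-1}{2}\rfloor-t$. Put $C_1=\mathrm{RM}(\lfloor\frac{m-1}{2}\rfloor-t,m)$ and $C_2=\mathrm{RM}(r_2,m)$ (so that $C_2\subseteq C_1$). Then $(C_1,C_2)$ is a binary CSS-$T$ pair if and only if $$\begin{cases} r_2\le 2t+1 & \text{if } m \text{ is even},\\ r_2\le 2t & \text{if } m \text{ is odd}.\end{cases}$$
   Context: $\mathrm{RM}(r,m)\subseteq\mathbb F_2^{2^m}$ is the binary Reed–Muller code of order $r$: the set of evaluation vectors, at all points of $\mathbb F_2^m$ in a fixed order, of polynomials in $\mathbb F_2[x_1,\dots,x_m]$ of degree at most $r$. The Hamming weight $\omega^{\mathrm H}(x)$ is the number of nonzero coordinates of $x$; $C^\perp$ is the dual with respect to the standard inner product. A pair of binary linear codes $(C_1,C_2)$ with $C_2\subseteq C_1\subseteq\mathbb F_2^n$ is a binary CSS-$T$ pair if (i) every $x\in C_2$ has even Hamming weight, and (ii) for every $x\in C_2$ there exists a linear code $C_x\subseteq C_1^\perp$ of dimension $\omega^{\mathrm H}(x)/2$ which is supported on $x$ (every $y\in C_x$ has $y_i=0$ whenever $x_i=0$) and is self-dual when regarded as a code of length $\omega^{\mathrm H}(x)$ on the support of $x$. *)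

(* Defs.v *)
From HB Require Import structures.
From mathcomp Require Import all_boot all_order all_algebra.
From mathcomp Require Import mpoly.
Set Implicit Arguments. Unset Strict Implicit. Unset Printing Implicit Defensive.
Import GRing.Theory.
Local Open Scope ring_scope.

Notation bvec n := 'rV['F_2]_n.

Definition wH n (x : bvec n) : nat := #|[set i | x 0 i != 0]|.

Definition dotv n (x y : bvec n) : 'F_2 := \sum_(i < n) x 0 i * y 0 i.

Definition supported_on n (y x : bvec n) : Prop := forall i, x 0 i = 0 -> y 0 i = 0.

(* The i-th point of F_2^m (fixed order: binary expansion of i, bit j = coordinate j). *)
Definition pt (m : nat) (i : 'I_(2 ^ m)) : 'I_m -> 'F_2 :=
  fun j => (odd (i %/ 2 ^ j))%:R.

Definition evalvec (m : nat) (p : {mpoly 'F_2[m]}) : bvec (2 ^ m) :=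
  \row_(i < 2 ^ m) p.@[pt i].

(* RM(r,m): evaluation vectors of polynomials of (total) degree at most r
   (msize p = 1 + degree, with msize 0 = 0). *)
Definition RM (r m : nat) : bvec (2 ^ m) -> Prop :=
  fun v => exists p : {mpoly 'F_2[m]}, (msize p <= r.+1)%N /\ v = evalvec p.

Arguments RM : clear implicits.

Definition CSS_T_pair n (C1 C2 : bvec n -> Prop) : Prop :=
  (forall x, C2 x -> C1 x) /\
  (forall x, C2 x -> ~~ odd (wH x)) /\
  (forall x, C2 x ->
     exists Cx : {vspace bvec n},
       [/\ \dim Cx = (wH x)./2,
           (forall y c, y \in Cx -> C1 c -> dotv y c = 0),
           (forall y, y \in Cx -> supported_on y x) &
           (* self-dual as a code on the support of x *)
           (forall z, supported_on z x ->
              (z \in Cx <-> forall y, y \in Cx -> dotv y z = 0))]).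

(* Main.v *)
Require Import Defs.
From HB Require Import structures.
From mathcomp Require Import all_boot all_order all_algebra.
From mathcomp Require Import mpoly.
From Stdlib Require Import Classical.
From mathcomp Require Import zify.
Set Implicit Arguments. Unset Strict Implicit. Unset Printing Implicit Defensive.
Import GRing.Theory.
Local Open Scope ring_scope.

Lemma F2_01 (a : 'F_2) : a = 0 \/ a = 1.
Proof. case: a => [[|[|k]] Hk]. left. by apply: val_inj. right; by apply: val_inj. by []. Qed.
Lemma F2_sq (a : 'F_2) : a * a = a.
Proof. by case: (F2_01 a) => ->; rewrite ?mul0r ?mul1r. Qed.

Section LA.
Variable w : nat.
Notation V := 'rV['F_2]_w.
Definition ones : V := const_mx 1.
Definition selforth (S : 'M['F_2]_w) :=
  forall a b : V, (a <= S)%MS -> (b <= S)%MS -> a *m b^T = 0.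
Definition perpS (S : 'M['F_2]_w) (z : V) :=
  forall b : V, (b <= S)%MS -> z *m b^T = 0.

Lemma orth_sym (a b : V) : a *m b^T = 0 -> b *m a^T = 0.
Proof. by move=> H; rewrite -[b]trmxK -trmx_mul H trmx0. Qed.

Lemma orth_subl (a v b : V) : (a <= v)%MS -> v *m b^T = 0 -> a *m b^T = 0.
Proof. by case/submxP=> k -> H; rewrite -mulmxA H mulmx0. Qed.

Arguments orth_subl {a v b}.
Lemma perp_ker S z : perpS S z <-> (z <= kermx S^T)%MS.
Proof.
split=> [H|].
  apply/sub_kermxP/matrixP=> i j; rewrite ord1.
  have := H _ (row_sub j S); rewrite tr_row => /matrixP/(_ 0 0) H0.
  transitivity ((z *m col j S^T) 0 0); last by rewrite H0 !mxE.
  by rewrite !mxE; apply: eq_bigr => k _; rewrite !mxE.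
move/sub_kermxP=> H b /submxP[c ->].
by rewrite trmx_mul mulmxA H mul0mx.
Qed.

Lemma sq_ones (v : V) : v *m v^T = v *m ones^T.
Proof.
apply/matrixP=> i j; rewrite !mxE; apply: eq_bigr => k _.
by rewrite !mxE !ord1 F2_sq mulr1.
Qed.

Lemma lagr (P : V -> Prop) : forall k (S : 'M['F_2]_w), (w - \rank S <= k)%N ->
  selforth S -> (ones <= S)%MS -> (forall c, P c -> perpS S c) ->
  (forall c c', P c -> P c' -> c *m c'^T = 0) ->
  exists S' : 'M['F_2]_w, [/\ selforth S', (forall c, P c -> perpS S' c) &
     (forall z, (z <= S')%MS <-> perpS S' z)].
Proof.
elim=> [|k IH] S Hk HS H1 HP HPP.
  exists S; split => // z; split; first by move=> Hz b Hb; apply: HS.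
  move=> Hz; apply: submx_full; rewrite /row_full eqn_leq rank_leq_col /=.
  by move: Hk; rewrite leqn0 subn_eq0.
have [Hmax|] := classic (forall z, perpS S z -> (z <= S)%MS).
  exists S; split => // z; split => [Hz b Hb|]; [exact: HS | exact: Hmax].
move=> Hn. have [z0 Hz0'] := not_all_ex_not _ _ Hn. have [Hz0 Hz0S] := imply_to_and _ _ Hz0'.
have [v [Hv HvS HvP]] : exists v, [/\ perpS S v, ~ (v <= S)%MS &
     forall c, P c -> v *m c^T = 0].
  have [[c [Pc HcS]]|Hall] := classic (exists c, P c /\ ~ (c <= S)%MS).
    by exists c; split => //; [apply: HP | move=> c' Pc'; apply: HPP].
  exists z0; split => // c Pc; apply: Hz0.
  by apply: NNPP => Hc; apply: Hall; exists c.
have Hvv : v *m v^T = 0 by rewrite sq_ones; apply: Hv.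
have decomp : forall a : V, (a <= S + v)%MS -> exists a1 a2 : V,
    [/\ a = a1 + a2, (a1 <= S)%MS & (a2 <= v)%MS].
  move=> a /sub_addsmxP [u ->]; exists (u.1 *m S), (u.2 *m v).
  by split; rewrite ?submxMl.
have Hsym : forall a b : V, a *m b^T = 0 -> b *m a^T = 0 by exact: orth_sym.
apply: (IH (S + v)%MS).
- have : (\rank S < \rank (S + v)%MS)%N.
    have Hlt : (S < S + v)%MS.
      rewrite ltmxE addsmxSl /=; apply/negP => H; apply: HvS.
      exact: submx_trans (addsmxSr S v) H.
    by move: Hlt; rewrite ltmxErank => /andP [].
  have := rank_leq_col (S + v)%MS; move: Hk; clear; lia.
- move=> a b /decomp [a1 [a2 [-> Ha1 Ha2]]] /decomp [b1 [b2 [-> Hb1 Hb2]]].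
  have e1 := orth_subl Ha2 (Hv _ Hb1).
  have e2 := Hsym _ _ (orth_subl Hb2 (Hv _ Ha1)).
  have e3 := orth_subl Ha2 (Hsym _ _ (orth_subl Hb2 Hvv)).
  by rewrite linearD /= !mulmxDl !mulmxDr HS // e1 e2 e3 !addr0.
- exact: submx_trans H1 (addsmxSl S v).
- move=> c Pc b /decomp [b1 [b2 [-> Hb1 Hb2]]].
  rewrite linearD /= mulmxDr (HP c Pc _ Hb1) add0r.
  by apply: Hsym; apply: (orth_subl Hb2); apply: HvP.
- exact: HPP.
Qed.
End LA.
Lemma rank_half w (S : 'M['F_2]_w) :
  (forall z, (z <= S)%MS <-> perpS S z) -> (\rank S * 2)%N = w.
Proof.
move=> H.
have E : (S == kermx S^T)%MS.
  apply/andP; split; apply/row_subP => i.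
    by apply/perp_ker; apply/H; apply: row_sub.
  by apply/H; apply/perp_ker; apply: row_sub.
have := eqmx_rank E; rewrite mxrank_ker mxrank_tr => Hr.
have := rank_leq_col S; lia.
Qed.

Lemma F2_ne0 (a : 'F_2) : a != 0 -> a = 1. Proof. by case: (F2_01 a) => ->. Qed.

Lemma dotvE n (y z : bvec n) : dotv y z = (y *m z^T) 0 0.
Proof. by rewrite /dotv mxE; apply: eq_bigr => i _; rewrite mxE. Qed.

Lemma mx11_eq0 (M : 'M['F_2]_1) : M = 0 <-> M 0 0 = 0.
Proof.
split=> [->|H]; first by rewrite mxE.
by apply/matrixP => i j; rewrite !ord1 H mxE.
Qed.

Section Transfer.
Variables (n : nat) (x : bvec n).
Definition TT := [set i | x 0 i != 0].
Definition EE : 'M['F_2]_(#|TT|, n) := \matrix_(k, i) ((enum_val k == i)%:R).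

Lemma xT i : x 0 i = (i \in TT)%:R.
Proof. by rewrite inE; case: (boolP (x 0 i != 0)) => [/F2_ne0|/negPn/eqP]. Qed.

Lemma sumT (i : 'I_n) :
  \sum_(k < #|TT|) ((enum_val k == i)%:R : 'F_2) = (i \in TT)%:R.
Proof.

rewrite -(big_enum_val (fun j => ((j == i)%:R : 'F_2))).
case: (boolP (i \in TT)) => Hi.
  rewrite (bigD1 i) //= eqxx big1 ?addr0 // => j /andP [_ /negbTE ->] //.
rewrite big1 // => j Hj; case: eqP => // E; by rewrite -E Hj in Hi.
Qed.

Lemma EEt : EE *m EE^T = 1%:M.
Proof.
apply/matrixP => k k'; rewrite !mxE (bigD1 (enum_val k)) //= !mxE eqxx mul1r big1.
  by rewrite addr0 (inj_eq enum_val_inj) eq_sym.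
move=> j /negbTE Hj; rewrite !mxE eq_sym Hj mul0r //.
Qed.

Lemma EtE : EE^T *m EE = diag_mx x.
Proof.
apply/matrixP => i i'; rewrite !mxE.
case: (eqVneq i i') => [<-|Hii].
  rewrite mulr1n xT -(sumT i); apply: eq_bigr => k _; rewrite !mxE.
  by case: (enum_val k == i); rewrite ?mul0r ?mul1r.
rewrite mulr0n big1 // => k _; rewrite !mxE.
case: (eqVneq (enum_val k) i) => [E|]; last by rewrite mul0r.
by rewrite -E in Hii; rewrite (negbTE Hii) mulr0.
Qed.

Lemma EdiagE : EE *m diag_mx x = EE.
Proof.
apply/matrixP => k i; rewrite mul_mx_diag !mxE xT.
case: eqP => [<-|]; last by rewrite mul0r.
by rewrite enum_valP mulr1.
Qed.

Lemma supp_emb (s : 'rV_#|TT|) : supported_on (s *m EE) x.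
Proof.
move=> i Hi; rewrite -EdiagE mulmxA mul_mx_diag mxE Hi mulr0 //.
Qed.

Lemma emb_proj (z : bvec n) : supported_on z x -> z *m EE^T *m EE = z.
Proof.
move=> Hz; rewrite -mulmxA EtE mul_mx_diag; apply/matrixP => i j; rewrite !mxE.
case: (F2_01 (x 0 j)) => E; rewrite ord1 E; last by rewrite mulr1.
by rewrite (Hz _ E) mulr0.
Qed.

Lemma proj_dot (c c' : bvec n) :
  ((c *m EE^T) *m (c' *m EE^T)^T) 0 0 = \sum_i x 0 i * c 0 i * c' 0 i.
Proof.
rewrite trmx_mul trmxK mulmxA -(mulmxA c) EtE mxE; apply: eq_bigr => i _.
by rewrite mul_mx_diag !mxE [x 0 i * _]mulrC.
Qed.
End Transfer.

Lemma transfer n (C1 : bvec n -> Prop) (x : bvec n) :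
  C1 x -> (forall c c', C1 c -> C1 c' -> \sum_i x 0 i * c 0 i * c' 0 i = 0) ->
  exists Cx : {vspace bvec n}, [/\ (\dim Cx * 2)%N = wH x,
    (forall y c, y \in Cx -> C1 c -> dotv y c = 0),
    (forall y, y \in Cx -> supported_on y x) &
    (forall z, supported_on z x -> (z \in Cx <-> forall y, y \in Cx -> dotv y z = 0))].
Proof.
move=> Cx1 H.
pose E := EE x.
pose pr (c : bvec n) := c *m E^T.
have Hpr : forall c c', C1 c -> C1 c' -> pr c *m (pr c')^T = 0.
  by move=> c c' Hc Hc'; apply/mx11_eq0; rewrite proj_dot; apply: H.
have Hones : pr x = ones #|TT x|.
  apply/matrixP => i k; rewrite !mxE (bigD1 (enum_val k)) //= big1.
    by rewrite addr0 ord1 xT enum_valP /E !mxE eqxx; apply: val_inj.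
  by move=> j /negbTE Hj; rewrite /E !mxE eq_sym Hj mulr0.
have Hsym := @orth_sym #|TT x|.
have Ho : ones #|TT x| *m (ones #|TT x|)^T = 0 by rewrite -Hones; apply: Hpr.
pose P c := exists c0, C1 c0 /\ c = pr c0.
have L1 : selforth <<ones #|TT x|>>%MS.
  move=> a b; rewrite !genmxE => Ha Hb.
  exact: orth_subl Ha (Hsym _ _ (orth_subl Hb Ho)).
have L2 : (ones #|TT x| <= <<ones #|TT x|>>)%MS by rewrite genmxE.
have L3 : forall c, P c -> perpS <<ones #|TT x|>>%MS c.
  move=> c [c0 [Hc0 ->]] b; rewrite genmxE => Hb.
  by apply: Hsym; apply: (orth_subl Hb); rewrite -Hones; apply: Hpr.
have L4 : forall c c', P c -> P c' -> c *m c'^T = 0.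
  by move=> c c' [c0 [Hc0 ->]] [c1 [Hc1 ->]]; apply: Hpr.
have [S [HS HP Hmax]] := lagr (leq_subr _ _) L1 L2 L3 L4.
have Hr := rank_half Hmax.
pose r := \rank S.
pose B := row_base S.
pose X := [tuple row i B *m E | i < r].
have HX : forall i : 'I_r, X`_i = row i B *m E by move=> i; rewrite nth_mktuple.
have HXs : forall u : 'rV_r, \sum_i u 0 i *: X`_i = u *m B *m E.
  move=> u; rewrite (mulmx_sum_row u B) mulmx_suml; apply: eq_bigr => i _.
  by rewrite HX scalemxAl.
have Hfree : free X.
  apply/freeP => k Hk i.
  pose u := \row_j k j.
  have : u *m B = 0.
    move: (congr1 (mulmx^~ E^T) Hk); rewrite /= mul0mx.
    have -> : \sum_(i < r) k i *: X`_i = \sum_i u 0 i *: X`_i.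
      by apply: eq_bigr => j _; rewrite mxE.
    by rewrite HXs -!mulmxA /E EEt mulmx1.
  move/eqP; rewrite mulmx_free_eq0 ?row_base_free // => /eqP /matrixP /(_ 0 i).
  by rewrite !mxE.
have Hmem : forall y, y \in <<X>>%VS <-> exists s, (s <= S)%MS /\ y = s *m E.
  move=> y; split.
    move/coord_span => ->; exists ((\row_i coord X i y) *m B); split.
      by rewrite -(eq_row_base S) submxMl.
    by rewrite -HXs; apply: eq_bigr => i _; rewrite mxE.
  move=> [s [Hs ->]].
  move: Hs; rewrite -(eq_row_base S) => /submxP [u ->].
  rewrite -HXs; apply: memv_suml => i _; apply: memvZ.
  by apply: memv_span; apply: mem_nth; rewrite size_tuple.
exists <<X>>%VS; split.
- by move: Hfree; rewrite /free size_tuple => /eqP ->.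
- move=> y c /Hmem [s [Hs ->]] Hc.
  rewrite dotvE; apply/mx11_eq0.
  have -> : s *m E *m c^T = s *m (pr c)^T by rewrite /pr trmx_mul trmxK mulmxA.
  have : P (pr c) by exists c.
  by move/HP => /(_ s Hs) /Hsym.
- by move=> y /Hmem [s [Hs ->]]; apply: supp_emb.
- move=> z Hz; split.
    move=> /Hmem [s [Hs ->]] y /Hmem [s' [Hs' ->]].
    rewrite dotvE; apply/mx11_eq0.
    by rewrite trmx_mul mulmxA -(mulmxA s') /E EEt mulmx1 HS.
  move=> Hy; apply/Hmem; exists (pr z); split; last by rewrite emb_proj.
  apply/Hmax => b Hb; apply: Hsym.
  have : (b *m E *m z^T) 0 0 = 0.
    by rewrite -dotvE; apply: Hy; apply/Hmem; exists b.
  by move/mx11_eq0 => H0; rewrite /pr trmx_mul trmxK mulmxA.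
Qed.

Lemma converse n (C1 : bvec n -> Prop) (x : bvec n) (Cx : {vspace bvec n}) :
 (forall y c, y \in Cx -> C1 c -> dotv y c = 0) ->
 (forall y, y \in Cx -> supported_on y x) ->
 (forall z, supported_on z x -> (z \in Cx <-> forall y, y \in Cx -> dotv y z = 0)) ->
 forall c c', C1 c -> C1 c' -> \sum_i x 0 i * c 0 i * c' 0 i = 0.
Proof.
move=> H1 H2 H3 c c' Hc Hc'.
pose z : bvec n := \row_i (x 0 i * c 0 i).
have Hz : supported_on z x by move=> i Hi; rewrite mxE Hi mul0r.
have : z \in Cx.
  apply/H3 => // y Hy; transitivity (dotv y c); last exact: H1 y c Hy Hc.
  rewrite /dotv; apply: eq_bigr => i _.
  rewrite mxE mulrA; case: (F2_01 (x 0 i)) => E; last by rewrite E mulr1.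
  by rewrite (H2 y Hy i E) !mul0r.
move=> Hzc; transitivity (dotv z c'); last exact: H1 z c' Hzc Hc'.
by rewrite /dotv; apply: eq_bigr => i _; rewrite mxE.
Qed.

Lemma css_iff n (C1 C2 : bvec n -> Prop) : (forall x, C2 x -> C1 x) ->
  CSS_T_pair C1 C2 <->
  (forall x c c', C2 x -> C1 c -> C1 c' -> \sum_i x 0 i * c 0 i * c' 0 i = 0).
Proof.
move=> H21; split.
  move=> [_ [_ H]] x c c' Hx Hc Hc'.
  have [Cx [_ Ha Hb Hc0]] := H x Hx.
  exact: converse Ha Hb Hc0 c c' Hc Hc'.
move=> H; split => //.
have T x : C2 x -> exists Cx : {vspace bvec n}, [/\ (\dim Cx * 2)%N = wH x,
    (forall y c, y \in Cx -> C1 c -> dotv y c = 0),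
    (forall y, y \in Cx -> supported_on y x) &
    (forall z, supported_on z x -> (z \in Cx <-> forall y, y \in Cx -> dotv y z = 0))].
  by move=> Hx; apply: transfer; [apply: H21 | move=> c c'; apply: H].
split.
  move=> x /T [Cx [E _ _ _]]; rewrite -E muln2 odd_double //.
move=> x /T [Cx [E Ha Hb Hc]]; exists Cx; split => //.
by rewrite -E muln2 doubleK.
Qed.

Lemma bits_inj m : forall i i', (i < 2 ^ m)%N -> (i' < 2 ^ m)%N ->
  (forall j, (j < m)%N -> odd (i %/ 2 ^ j) = odd (i' %/ 2 ^ j)) -> i = i'.
Proof.
elim: m => [|m IH] i i' Hi Hi' H.
  by move: Hi Hi'; rewrite expn0; lia.
have H0 := H 0%N (ltn0Sn _); rewrite expn0 !divn1 in H0.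
have E : (i %/ 2 = i' %/ 2)%N.
  apply: IH.
  - by rewrite ltn_divLR // -expnSr.
  - by rewrite ltn_divLR // -expnSr.
  move=> j Hj; rewrite -!divnMA -expnS; apply: H; lia.
by rewrite (divn_eq i 2) (divn_eq i' 2) !modn2 E H0.
Qed.

Definition ptf m (i : 'I_(2 ^ m)) : {ffun 'I_m -> 'F_2} := [ffun j => pt i j].

Lemma ptf_bij m : bijective (@ptf m).
Proof.
apply: inj_card_bij; last by rewrite card_ffun !card_ord.
move=> i i' /ffunP E; apply: val_inj; apply: (@bits_inj m _ _ (ltn_ord i) (ltn_ord i')) => j Hj.
have := E (Ordinal Hj); rewrite !ffunE /pt /=.
by case: (odd _); case: (odd _).
Qed.

Lemma sum_pts m (G : {ffun 'I_m -> 'F_2} -> 'F_2) :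
  \sum_(i < 2 ^ m) G (ptf i) = \sum_f G f.
Proof. by rewrite (reindex (@ptf m)) //; apply: onW_bij; apply: ptf_bij. Qed.

Lemma sumF2_1 : \sum_(b : 'F_2) (1 : 'F_2) = 0.
Proof. by rewrite sumr_const card_Fp //; apply: val_inj. Qed.

Lemma sumF2_id : \sum_(b : 'F_2) b = 1.
Proof.
rewrite (bigD1 0) //= (bigD1 1) //= big1 ?add0r ?addr0 //.
by move=> b /andP [H0 H1]; case: (F2_01 b) H0 H1 => ->.
Qed.

Lemma sum_mono_zero m (a : 'X_{1..m}) : (mdeg a < m)%N ->
  \sum_(i < 2 ^ m) \prod_j pt i j ^+ a j = 0.
Proof.
move=> Ha.
have [j Hj] : exists j, a j = 0%N.
  case: (boolP [exists j, a j == 0%N]) => [/existsP [j /eqP Hj]|/existsPn H].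
    by exists j.
  have : (\sum_(j < m) 1 <= mdeg a)%N.
    by rewrite mdegE; apply: leq_sum => j _; rewrite lt0n H.
  by rewrite sum1_card card_ord leqNgt Ha.
transitivity (\sum_i \prod_j ptf i j ^+ a j).
  by apply: eq_bigr => i _; apply: eq_bigr => k _; rewrite ffunE.
rewrite (sum_pts (fun f => \prod_j f j ^+ a j)).
rewrite -(bigA_distr_bigA (fun j (b : 'F_2) => b ^+ a j)).
rewrite (bigD1 j) //= Hj.
under eq_bigr do rewrite expr0.
by rewrite sumF2_1 mul0r.
Qed.

Lemma sum_eval_zero m (p : {mpoly 'F_2[m]}) : (msize p <= m)%N ->
  \sum_(i < 2 ^ m) p.@[pt i] = 0.
Proof.
move=> Hp.
under eq_bigr do rewrite mevalE.
rewrite exchange_big /=; apply: big1_seq => a /andP [_ Ha].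
rewrite -mulr_sumr sum_mono_zero ?mulr0 //.
exact: leq_trans (msize_mdeg_lt Ha) Hp.
Qed.

Lemma msizeM_le2 m (p q : {mpoly 'F_2[m]}) : (msize (p * q) <= (msize p + msize q).-1)%N.
Proof.
have [->|Hp] := eqVneq p 0; first by rewrite mul0r msize0.
have [->|Hq] := eqVneq q 0; first by rewrite mulr0 msize0.
by rewrite msizeM.
Qed.

Lemma sum_mono_one m : \sum_(i < 2 ^ m) \prod_j pt i j = 1.
Proof.
transitivity (\sum_(i < 2 ^ m) \prod_j ptf i j).
  by apply: eq_bigr => i _; apply: eq_bigr => k _; rewrite ffunE.
rewrite (sum_pts (fun f => \prod_j f j)).
rewrite -(bigA_distr_bigA (fun j (b : 'F_2) => b)).
by apply: big1 => j _; apply: sumF2_id.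
Qed.

Lemma sum_interval m a b :
  (\sum_(j < m) ((a <= j) && (j < b) : nat) <= b - a)%N.
Proof.
suff : (\sum_(j < m) ((a <= j) && (j < b) : nat) <= minn m b - a)%N by lia.
elim: m => [|m IH]; first by rewrite big_ord0.
rewrite big_ord_recr /=; move: IH.
case: (leqP a m); case: (ltnP m b); rewrite /=; lia.
Qed.

Definition mono m a b : 'X_{1..m} := [multinom ((a <= j) && (j < b) : nat) | j < m].

Lemma mono_RM m a b r : (b - a <= r)%N -> RM r m (evalvec 'X_[mono m a b]).
Proof.
move=> H; exists 'X_[mono m a b]; split => //.
rewrite msizeX ltnS mdegE.
under eq_bigr do rewrite mnmE.
exact: leq_trans (sum_interval _ _ _) H.
Qed.

Arguments mono_RM : clear implicits.

Theorem mainTheorem3 (m t r2 : nat) :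
  (2 <= m)%N -> (t <= (m.-1)./2)%N -> (r2 <= (m.-1)./2 - t)%N ->
  CSS_T_pair (RM ((m.-1)./2 - t) m) (RM r2 m) <->
  (if odd m then (r2 <= 2 * t)%N else (r2 <= 2 * t + 1)%N).
Proof.
move=> Hm Ht Hr.
set r1 := ((m.-1)./2 - t)%N.
have Er1 : r1 = ((m.-1)./2 - t)%N by [].
have Harith : (if odd m then (r2 <= 2*t)%N else (r2 <= 2*t+1)%N) <-> (r2 + 2 * r1 < m)%N.
  have Hh := odd_double_half m.-1.
  have Ho : odd m = ~~ odd m.-1 by rewrite -oddS prednK //; lia.
  rewrite -muln2 in Hh.
  by case: (odd m.-1) Hh Ho => /= Hh ->; split; lia.
rewrite css_iff; last first.
  move=> v [p [Hp ->]]; exists p; split => //; lia.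
rewrite Harith; split; last first.
  move=> Hlt x c c' [p [Hp ->]] [q [Hq ->]] [q' [Hq' ->]].
  transitivity (\sum_i (p * q * q').@[pt i]).
    by apply: eq_bigr => i _; rewrite !mxE !mevalM.
  apply: sum_eval_zero.
  have h1 := msizeM_le2 p q; have h2 := msizeM_le2 (p * q) q'; lia.
move=> H; rewrite ltnNge; apply/negP => Hge.
have := H _ _ _ (mono_RM m 0%N r2 r2 (leq_subr _ _))
   (mono_RM m r2 (r2 + r1) r1 ltac:(lia))
   (mono_RM m (r2 + r1) m r1 ltac:(lia)).
move=> H0.
have E : forall i : 'I_(2 ^ m),
   (evalvec 'X_[mono m 0%N r2]) 0 i * (evalvec 'X_[mono m r2 (r2 + r1)]) 0 i
   * (evalvec 'X_[mono m (r2 + r1) m]) 0 i = \prod_j pt i j.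
  move=> i; rewrite !mxE !mevalX -!big_split /=; apply: eq_bigr => j _.
  rewrite -!exprD !mnmE.
  have -> : (((0 <= j) && (j < r2) : nat) + ((r2 <= j) && (j < r2 + r1))
             + ((r2 + r1 <= j) && (j < m)))%N = 1%N.
    have := ltn_ord j.
    case: (ltnP j r2); case: (leqP r2 j); case: (ltnP j (r2 + r1));
      case: (leqP (r2 + r1) j); rewrite /=; lia.
  by rewrite expr1.
have : \sum_(i < 2 ^ m) \prod_j pt i j = 0.
  by rewrite -[RHS]H0; apply: eq_bigr => i _; rewrite E.
by rewrite sum_mono_one.
Qed.
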